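(* Let $\mathcal{A}$ be a central arrangement of rank $r$ and let $\pi=(\pi_1,\ldots,\pi_r)$ be a factorization of $\mathcal{A}$. Suppose $Z\in L(\mathcal{A})$ is modular of rank $r-1$ with $\pi_1=\mathcal{A}\setminus\mathcal{A}_Z$. Then every $H\in\pi_1$ is distinguished with respect to $\pi$. In particular, for $H_0\in\pi_1$ with triple $(\mathcal{A},\mathcal{A}',\mathcal{A}'')$, the restriction map $\mathrm{R}:\mathcal{A}_Z\to\mathcal{A}''$, $H\mapsto H\cap H_0$, is bijective.
   Context: A central arrangement is a finite set of linear hyperplanes in $V=\mathbb{K}^\ell$ ($\mathbb{K}$ a field); its rank is the codimension of the intersection of all its members. $L(\mathcal{A})$ is the set of intersections of subsets of $\mathcal{A}$ ($V$ included), with rank $r(X)=\operatorname{codim}X$; $\mathcal{A}_X=\{H\in\mathcal{A}\mid X\subseteq H\}$. $X\in L(\mathcal{A})$ is modular if $X+Y\in L(\mathcal{A})$ for all $Y\in L(\mathcal{A})$. A partition $\pi=(\pi_1,\ldots,\pi_s)$ is a factorization (nice) if it is independent (for every choice $H_i\in\pi_i$, $\operatorname{codim}(H_1\cap\cdots\cap H_s)=s$) and for every $X\in L(\mathcal{A})\setminus\{V\}$ some non-empty set $\pi_i\cap\mathcal{A}_X$ is a singleton. For $H_0\in\pi_1$ the triple is $\mathcal{A}'=\mathcal{A}\setminus\{H_0\}$, $\mathcal{A}''=\{H_0\cap H\mid H\in\mathcal{A}'\}$; $H_0$ is distinguished with respect to $\pi$ if the non-empty sets $\pi_i\cap\mathcal{A}'$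 form a factorization of $\mathcal{A}'$. *)

(* Defs.v *)
From HB Require Import structures.
From mathcomp Require Import all_boot all_order all_algebra.
Set Implicit Arguments. Unset Strict Implicit. Unset Printing Implicit Defensive.
Import GRing.Theory.
Local Open Scope ring_scope.

(* A hyperplane arrangement in V = K^l is given by a finite index type I and
   an injective family H : I -> {vspace 'rV[K]_l} of linear hyperplanes.
   Sub-arrangements (e.g. A' = A \ {H0}) are subsets S : {set I}. *)
Section Arr.
Variables (K : fieldType) (l : nat) (I : finType).
Variable H : I -> {vspace 'rV[K]_l}.

Definition is_hyperplane_family : Prop :=
  forall i, (\dim (H i)).+1 = l.

Definition codim (X : {vspace 'rV[K]_l}) : nat := l - \dim X.

Definition meet (T : {set I}) : {vspace 'rV[K]_l} := (\bigcap_(i in T) H i)%VS.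

Definition arr_rank (S : {set I}) : nat := codim (meet S).

Definition in_L (S : {set I}) (X : {vspace 'rV[K]_l}) : Prop :=
  exists2 T : {set I}, T \subset S & X = meet T.

Definition loc (S : {set I}) (X : {vspace 'rV[K]_l}) : {set I} :=
  [set i in S | (X <= H i)%VS].

Definition modular (S : {set I}) (X : {vspace 'rV[K]_l}) : Prop :=
  in_L S X /\ forall Y, in_L S Y -> in_L S (X + Y)%VS.

Definition independent (P : {set {set I}}) : Prop :=
  forall f : {set I} -> I, (forall B, B \in P -> f B \in B) ->
    codim (\bigcap_(B in P) H (f B))%VS = #|P|.

Definition factorization (S : {set I}) (P : {set {set I}}) : Prop :=
  [/\ partition P S, independent P &
      forall X, in_L S X -> X != fullv ->
        exists2 B, B \in P & #|B :&: loc S X| = 1%N].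

Definition deleted_partition (P : {set {set I}}) (i0 : I) : {set {set I}} :=
  [set B :\ i0 | B in P] :\ set0.

Definition distinguished (S : {set I}) (P : {set {set I}}) (i0 : I) : Prop :=
  factorization (S :\ i0) (deleted_partition P i0).

Definition in_restriction (S : {set I}) (i0 : I) (Y : {vspace 'rV[K]_l}) : Prop :=
  exists2 j, j \in S :\ i0 & Y = (H i0 :&: H j)%VS.

End Arr.

(* Main.v *)
Require Import Defs.
From HB Require Import structures.
From mathcomp Require Import all_boot all_order all_algebra.
From mathcomp Require Import zify.
Set Implicit Arguments. Unset Strict Implicit. Unset Printing Implicit Defensive.
Import GRing.Theory.
Local Open Scope ring_scope.

Section Helpers.
Variables (K : fieldType) (l : nat) (I : finType).
Variable H : I -> {vspace 'rV[K]_l}.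
Hypothesis Hhyp : is_hyperplane_family H.

Lemma dimV : \dim (fullv : {vspace 'rV[K]_l}) = l.
Proof. rewrite dimvf; have := (@dim_matrix K 1 l); rewrite mul1r; exact. Qed.

Lemma dim_le (U : {vspace 'rV[K]_l}) : (\dim U <= l)%N.
Proof. by have := dimvS (subvf U); rewrite dimV. Qed.

Lemma cap_hyp i j : H i != H j -> (\dim (H i :&: H j)).+2 = l.
Proof.
move=> neq.
have := dimv_sum_cap (H i) (H j).
have := dim_le (H i + H j)%VS.
have hi := Hhyp i; have hj := Hhyp j.
have lt : (\dim (H i) < \dim (H i + H j))%N.
  rewrite ltnNge; apply/negP => le.
  have : (H i == H i + H j)%VS by rewrite eqEdim addvSl le.
  move/eqP => e.
  have sji : (H j <= H i)%VS by rewrite e addvSr.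
  have : (H j == H i) by rewrite eqEdim sji /=; apply/leP; lia.
  by rewrite eq_sym (negbTE neq).
lia.
Qed.

Lemma cap_hyp_ge (U : {vspace 'rV[K]_l}) i :
  (\dim U <= (\dim (H i :&: U)).+1)%N.
Proof.
have := dimv_sum_cap (H i) U.
have := dim_le (H i + U)%VS.
have hi := Hhyp i. lia.
Qed.

Lemma bigcap_seq (A : Type) (s : seq A) (g : A -> I) :
  (l <= \dim (\bigcap_(x <- s) H (g x)) + size s)%N.
Proof.
elim: s => [|x s IH]; first by rewrite big_nil dimV addn0.
rewrite big_cons /=.
have := cap_hyp_ge (\bigcap_(x <- s) H (g x))%VS (g x). lia.
Qed.

Lemma bigcap_set (A : finType) (T : {set A}) (g : A -> I) :
  (l <= \dim (\bigcap_(x in T) H (g x)) + #|T|)%N.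
Proof.
by rewrite -big_enum cardE; apply: bigcap_seq.
Qed.

End Helpers.

Theorem lemma3p10 (K : fieldType) (l : nat) (I : finType)
    (H : I -> {vspace 'rV[K]_l})
    (Hhyp : is_hyperplane_family H) (Hinj : injective H)
    (r : nat) (Hrank : arr_rank H [set: I] = r)
    (P : {set {set I}}) (HP : factorization H [set: I] P) (HPcard : #|P| = r)
    (pi1 : {set I}) (Hpi1 : pi1 \in P)
    (Z : {vspace 'rV[K]_l}) (HZmod : modular H [set: I] Z)
    (HZrank : codim Z = r.-1)
    (Hpi1Z : pi1 = [set: I] :\: loc H [set: I] Z) :
  (forall i0, i0 \in pi1 -> distinguished H [set: I] P i0) /\
  (forall i0, i0 \in pi1 ->
     [/\ forall i, i \in loc H [set: I] Z ->
           in_restriction H [set: I] i0 (H i0 :&: H i)%VS,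
         {in loc H [set: I] Z &, injective (fun i => (H i0 :&: H i)%VS)} &
         forall Y, in_restriction H [set: I] i0 Y ->
           exists2 i, i \in loc H [set: I] Z & Y = (H i0 :&: H i)%VS]).
Proof.
have hpi1 : forall i, (i \in pi1) = ~~ (Z <= H i)%VS.
  by move=> i; rewrite Hpi1Z /loc !inE /= andbT.
have neqH : forall i j, i != j -> H i != H j.
  by move=> i j; apply: contra => /eqP /Hinj ->.
have capd : forall i j, i != j -> (\dim (H i :&: H j)).+2 = l.
  by move=> i j /neqH; apply: cap_hyp.
have dimle := @dim_le K l.
move: HZmod; rewrite /modular /in_L => -[[T0 _ ZT0] Zmod].
have meetZ : (meet H [set: I] <= Z)%VS.
  rewrite ZT0; apply/subv_bigcapP => i _; exact: (bigcapv_inf i).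
have meetH : forall i, (meet H [set: I] <= H i)%VS.
  by move=> i; exact: (bigcapv_inf i).
have r1 : (0 < r)%N by rewrite -HPcard; apply/card_gt0P; exists pi1.
split; last first.
  move=> i0 hi0.
  have Zi0 : ~~ (Z <= H i0)%VS by rewrite -hpi1.
  have locP : forall i, (i \in loc H [set: I] Z) = (Z <= H i)%VS.
    by move=> i; rewrite /loc !inE.
  have ni0 : forall i, i \in loc H [set: I] Z -> i != i0.
    move=> i; rewrite locP => Zi; apply/eqP => e; subst i.
    by rewrite Zi in Zi0.
  split.
  - move=> i hi; exists i => //; by rewrite !inE ni0.
  - move=> i j hi hj /= e; apply/eqP; apply/negPn/negP => nij.
    have e1 : (H i0 :&: H i == H i :&: H j)%VS.
      have d1 := capd i0 i; have d2 := capd i j nij.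
      rewrite eqEdim; apply/andP; split; last first.
        rewrite eq_sym in d1; have := d1 (ni0 _ hi); lia.
      by rewrite subv_cap capvSr /= e capvSr.
    have : (Z <= H i0)%VS.
      apply: subv_trans (capvSl (H i0) (H i)).
      rewrite (eqP e1) subv_cap.
      by rewrite -!locP hi hj.
    by rewrite (negbTE Zi0).
  - move=> Y [j hj ->].
    have ji0 : j != i0 by move: hj; rewrite !inE andbT.
    have dX : (\dim (H i0 :&: H j)%VS).+2 = l by rewrite capd // eq_sym.
    have XL : in_L H [set: I] (H i0 :&: H j)%VS.
      exists [set i0; j]; first exact: subsetT.
      apply/eqP; rewrite eqEsubv /meet; apply/andP; split.
      - apply/subv_bigcapP => i; rewrite !inE => /orP [] /eqP ->;
          [exact: capvSl | exact: capvSr].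
      - rewrite subv_cap; apply/andP; split;
          [apply: (bigcapv_inf i0) | apply: (bigcapv_inf j)];
          by rewrite ?inE ?eqxx ?orbT.
    case: (Zmod _ XL) => T1 _ eT1.
    have dM : (\dim (meet H [set: I]) + r)%N = l.
      move: Hrank; rewrite /arr_rank /codim; have := dimle (meet H [set: I]); lia.
    have dZ : (\dim Z + r.-1)%N = l.
      move: HZrank; rewrite /codim; have := dimle Z; lia.
    have MZX : (meet H [set: I] <= Z :&: (H i0 :&: H j))%VS.
      by rewrite !subv_cap meetZ !meetH.
    have dlt : (\dim (Z + (H i0 :&: H j)) < l)%N.
      have := dimvS MZX; have := dimv_sum_cap Z (H i0 :&: H j)%VS; lia.
    have T1n : T1 != set0.
      apply/negP => /eqP e0; move: dlt.
      by rewrite eT1 e0 /meet big_set0 dimV ltnn.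
    case/set0Pn: T1n => i hi.
    have sZXi : (Z + (H i0 :&: H j) <= H i)%VS.
      by rewrite eT1; apply: (bigcapv_inf i).
    have Zi : (Z <= H i)%VS := subv_trans (addvSl _ _) sZXi.
    have Xi : (H i0 :&: H j <= H i)%VS := subv_trans (addvSr _ _) sZXi.
    have il : i \in loc H [set: I] Z by rewrite locP.
    exists i => //.
    apply/eqP; rewrite eqEdim subv_cap capvSl Xi /=.
    have := capd i0 i; rewrite eq_sym (ni0 _ il) => /(_ isT); lia.
move=> i0 hi0.
have Zi0 : ~~ (Z <= H i0)%VS by rewrite -hpi1.
case: HP => Hpart Hind Hnice.
case/and3P: Hpart => /eqP Hcov Htriv HP0.
have Ht := elimT trivIsetP Htriv.
have blk : forall B x, B \in P -> x \in B -> x \in pi1 -> B = pi1.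
  move=> B x hB xB xp.
  by rewrite -(def_pblock Htriv hB xB) (def_pblock Htriv Hpi1 xp).
have inP : forall x, exists2 B, B \in P & x \in B.
  move=> x; have : x \in cover P by rewrite Hcov inE.
  by rewrite /cover => /bigcupP.
have nz : forall B, B \in P -> B != set0.
  by move=> B hB; apply: contraNneq HP0 => e; rewrite -e.
have D1id : forall (B : {set I}) x, x \notin B -> B :\ x = B.
  move=> B x xB; apply/setP => y; rewrite in_setD1.
  by case: eqVneq => // ->; rewrite (negbTE xB).
set Q := deleted_partition P i0.
have QP : forall B', (B' \in Q) = (B' != set0) && (B' \in [set B :\ i0 | B in P]).
  by move=> B'; rewrite /Q /deleted_partition in_setD1.
rewrite /distinguished -/Q; split.
- apply/and3P; split.
  + apply/eqP/setP => x; rewrite /cover; apply/bigcupP/idP.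
    * case=> B'; rewrite QP => /andP [_ /imsetP [B hB ->]].
      by rewrite !inE => /andP [-> _].
    * rewrite !inE andbT => xi0; case: (inP x) => B hB xB.
      exists (B :\ i0); last by rewrite !inE xi0.
      rewrite QP (imset_f _ hB) andbT; apply/set0Pn; exists x.
      by rewrite !inE xi0.
  + apply/trivIsetP => B1 B2; rewrite !QP.
    move=> /andP [_ /imsetP [B hB ->]] /andP [_ /imsetP [C hC ->]] ne.
    have neBC : B != C by apply: contraNneq ne => ->.
    exact: disjointW (subsetDl _ _) (subsetDl _ _) (Ht _ _ hB hC neBC).
  + by rewrite QP eqxx.
- move=> f hf.
  have [e0 | ne0] := eqVneq (pi1 :\ i0) set0.
  + have QE : Q = P :\ pi1.
      apply/setP => B'; rewrite QP in_setD1; apply/andP/andP.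
      * case=> nzB /imsetP [B hB eB].
        have Bpi : B != pi1 by apply: contraNneq nzB => e; rewrite eB e e0.
        have i0B : i0 \notin B.
          by apply/negP => iB; rewrite (blk _ _ hB iB hi0) eqxx in Bpi.
        by rewrite eB D1id.
      * case=> Bpi hB.
        have i0B : i0 \notin B'.
          by apply/negP => iB; rewrite (blk _ _ hB iB hi0) eqxx in Bpi.
        split; first exact: nz.
        by rewrite -(D1id _ _ i0B); apply: imset_f.
    rewrite QE in hf *.
    pose g B := if B == pi1 then i0 else f B.
    have hg : forall B, B \in P -> g B \in B.
      move=> B hB; rewrite /g; case: eqVneq => [-> //|nB].
      by apply: hf; rewrite in_setD1 nB.
    have := Hind g hg.
    rewrite (bigD1 pi1 Hpi1) /= /g eqxx.
    rewrite (eq_bigr (fun B => H (f B))); last by move=> B /andP [_ /negbTE ->].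
    rewrite (eq_bigl (fun B => B \in P :\ pi1)); last by move=> B; rewrite in_setD1 andbC.
    set W := (\bigcap_(B in P :\ pi1) H (f B))%VS.
    move=> hcod.
    have cP := cardsD1 pi1 P; rewrite Hpi1 add1n in cP.
    have := bigcap_set Hhyp (P :\ pi1) f.
    have := cap_hyp_ge Hhyp W i0.
    have := dimle W; have := dimle (H i0 :&: W)%VS.
    move: hcod; rewrite /codim -/W cP; clearbody W; move: (\dim W) (\dim (H i0 :&: W)%VS) (#|P :\ pi1|) => a b c; move: a b c; apply: (fun (F : forall a b c : nat, _) => F) => a b c; lia.
  + have nzP : forall B, B \in P -> B :\ i0 != set0.
      move=> B hB; apply/negP => /eqP eB.
      case/set0Pn: (nz _ hB) => x xB.
      have xi : x = i0.
        apply/eqP; apply/negPn/negP => nx.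
        have : x \in B :\ i0 by rewrite !inE nx xB.
        by rewrite eB inE.
      subst x; rewrite (blk _ _ hB xB hi0) in eB.
      by rewrite eB eqxx in ne0.
    have injD : {in P &, injective (fun B => B :\ i0)}.
      move=> B C hB hC e.
      case/set0Pn: (nzP _ hB) => x xB'.
      have xC : x \in C :\ i0 by rewrite -e.
      rewrite !inE in xB' xC.
      case/andP: xB' => _ xB; case/andP: xC => _ xC.
      by rewrite -(def_pblock Htriv hB xB) (def_pblock Htriv hC xC).
    have QE : Q = [set B :\ i0 | B in P].
      apply/setP => B'; rewrite QP; apply/andb_idl => /imsetP [B hB ->].
      exact: nzP.
    rewrite QE in hf *.
    rewrite (big_imset _ injD) (card_in_imset injD) /=.
    apply: (Hind (fun B => f (B :\ i0))) => B hB.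
    by have := hf _ (imset_f _ hB); rewrite !inE => /andP [_ ->].
- move=> X [T hT eX] nX.
  have XL : in_L H [set: I] X by exists T => //; apply: subsetT.
  case: (Hnice X XL nX) => B hB /eqP /cards1P [k ek].
  have ekP : B :&: loc H [set: I] X =i [set k] by apply/setP.
  have := ekP k; rewrite /loc !inE eqxx /= => /andP [kB Xk].
  have ki0 : k != i0.
    apply/negP => /eqP ek0; subst k.
    have Bp := blk _ _ hB kB hi0.
    have : (Z <= H i0)%VS; last by rewrite (negbTE Zi0).
    apply: subv_trans Xk; rewrite eX /meet; apply/subv_bigcapP => t ht.
    have tT : t \in [set: I] :\ i0 := subsetP hT t ht.
    have : t \notin pi1.
      apply/negP => tp.
      have Xt : (X <= H t)%VS by rewrite eX /meet; apply: (bigcapv_inf t).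
      have := ekP t; rewrite /loc !inE Bp tp Xt /= => /esym /eqP et.
      by rewrite et !inE eqxx in tT.
    by rewrite hpi1 negbK.
  exists (B :\ i0).
  + rewrite QP (imset_f _ hB) andbT; apply/set0Pn; exists k.
    by rewrite !inE ki0.
  + apply/eqP/cards1P; exists k; apply/setP => x.
    have hx := ekP x; rewrite /loc !inE /= in hx *.
    case: (eqVneq x i0) => [->|xi] /=.
      by rewrite eq_sym (negbTE ki0).
    by rewrite ?andbT hx.
Qed.
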